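(* Let $v_1\ge\cdots\ge v_n>0$, $1\ge q_1\ge\cdots\ge q_n\ge 0$, and $a=(a_1,\dots,a_n)\in(0,\infty)^n$. For $b\in(0,\infty)^n$ put $\lambda(b)=\frac{\sum_i v_i b_i q_i}{\sum_i v_i b_i}$, let $S=\sum_i v_i a_i$, and let $e_j$ be the $j$-th unit vector. Then $$\sum_{j=1}^n \frac{v_j a_j q_j}{S}\,\lambda(a+e_j)\;+\;\Big(1-\sum_{j=1}^n\frac{v_j a_j q_j}{S}\Big)\lambda(a)\;\ge\;\lambda(a).$$ Equivalently, in the dynamic trial-offer market under the quality ranking with social influence, for every step $t$ the conditional probability (given the history up to step $t$) of a purchase at step $t+1$ is at least the conditional probability of a purchase at step $t$; hence the expected number of purchases per step is non-decreasing in $t$.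
   Context: Dynamic trial-offer market with social influence under the quality ranking: products $1,\dots,n$ with initial appeals $A_i>0$, qualities $1\ge q_1\ge\cdots\ge q_n\ge0$, and product $i$ permanently displayed in position $i$ with visibility $v_i$, where $v_1\ge\cdots\ge v_n>0$. Let $d_{i,t}$ be the number of purchases of product $i$ before step $t$ ($d_{i,1}=0$) and $a_{i,t}=A_i+d_{i,t}$. At step $t$ one participant tries product $i$ with probability $\frac{v_i a_{i,t}}{\sum_j v_j a_{j,t}}$, then purchases it with probability $q_i$ (independently); if purchased, $d_{i,t+1}=d_{i,t}+1$, and all other counts are unchanged. The probability of a purchase at step $t$, given the history, is $\lambda(a_{\cdot,t})$. *)

(* Defs.v *)
From HB Require Import structures.
From mathcomp Require Import all_boot all_order all_algebra.
Set Implicit Arguments. Unset Strict Implicit. Unset Printing Implicit Defensive.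
Import Order.TTheory GRing.Theory Num.Theory.
Local Open Scope ring_scope.

Definition lam (R : realFieldType) (n : nat) (v q b : 'I_n -> R) : R :=
  (\sum_(i < n) v i * b i * q i) / (\sum_(i < n) v i * b i).

Definition add_unit (R : realFieldType) (n : nat) (b : 'I_n -> R) (j : 'I_n)
  : 'I_n -> R := fun i => b i + (i == j)%:R.

(* Main.v *)
Require Import Defs.
From HB Require Import structures.
From mathcomp Require Import all_boot all_order all_algebra.
From mathcomp Require Import ring lra.
Import Order.TTheory GRing.Theory Num.Theory.
Local Open Scope ring_scope.

Lemma cheb (R : realFieldType) (n : nat) (u g h : 'I_n -> R) :
  (forall i, 0 <= u i) ->
  (forall i j : 'I_n, (i <= j)%N -> g j <= g i) ->
  (forall i j : 'I_n, (i <= j)%N -> h j <= h i) ->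
  (\sum_i u i * g i) * (\sum_i u i * h i) <=
  (\sum_i u i) * (\sum_i u i * g i * h i).
Proof.
move=> hu hg hh.
have key : 0 <= \sum_i \sum_j u i * u j * (g i - g j) * (h i - h j).
  apply: sumr_ge0 => i _; apply: sumr_ge0 => j _.
  have uu : 0 <= u i * u j by apply: mulr_ge0.
  case: (leqP i j) => hij.
    apply: mulr_ge0; first apply: mulr_ge0 => //.
      by rewrite subr_ge0 hg.
    by rewrite subr_ge0 hh.
  have hji : (j <= i)%N by apply: ltnW.
  rewrite -mulrA; apply: mulr_ge0 => //; apply: mulr_le0.
    by rewrite subr_le0 hg.
  by rewrite subr_le0 hh.
have E : \sum_i \sum_j u i * u j * (g i - g j) * (h i - h j) =
  2 * ((\sum_i u i) * (\sum_i u i * g i * h i) - (\sum_i u i * g i) * (\sum_i u i * h i)).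
  transitivity (\sum_i ((u i * g i * h i) * (\sum_j u j) + u i * (\sum_j u j * g j * h j)
      - (u i * g i) * (\sum_j u j * h j) - (u i * h i) * (\sum_j u j * g j))).
    apply: eq_bigr => i _.
    rewrite !mulr_sumr -big_split -!sumrB /=.
    apply: eq_bigr => j _; ring.
  rewrite !sumrB big_split /= -!mulr_suml; ring.
move: key; rewrite E; nra.
Qed.

Theorem mainTheorem3 (R : realFieldType) (n : nat) (v q a : 'I_n -> R)
  (hv_mono : forall i j : 'I_n, (i <= j)%N -> v j <= v i)
  (hv_pos : forall i : 'I_n, 0 < v i)
  (hq_mono : forall i j : 'I_n, (i <= j)%N -> q j <= q i)
  (hq_le1 : forall i : 'I_n, q i <= 1)
  (hq_ge0 : forall i : 'I_n, 0 <= q i)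
  (ha_pos : forall i : 'I_n, 0 < a i) :
  let S := \sum_(i < n) v i * a i in
  \sum_(j < n) (v j * a j * q j / S) * lam v q (add_unit a j)
    + (1 - \sum_(j < n) v j * a j * q j / S) * lam v q a
  >= lam v q a.
Proof.
cbv zeta.
case: n v q a hv_mono hv_pos hq_mono hq_le1 hq_ge0 ha_pos => [|n] v q a hv_mono hv_pos hq_mono hq_le1 hq_ge0 ha_pos;
  set S := \sum_(i < _) v i * a i.
  by rewrite /S /lam !big_ord0 mul0r subr0 mul1r add0r.
have Spos : 0 < S.
  rewrite /S (bigD1 ord0) //=; apply: ltr_pwDl; first by apply: mulr_gt0.
  by apply: sumr_ge0 => i _; apply: mulr_ge0; apply: ltW.
set N := \sum_(i < n.+1) v i * a i * q i.
have lamE : lam v q a = N / S by [].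
have hsum : forall (c : 'I_n.+1 -> R) j,
    \sum_i c i * add_unit a j i = \sum_i c i * a i + c j.
  move=> c j; rewrite /add_unit.
  under eq_bigr do rewrite mulrDr.
  rewrite big_split /=; congr (_ + _).
  rewrite (bigD1 j) //= eqxx mulr1 big1 ?addr0 // => i /negbTE ->; by rewrite mulr0.
have hj : forall j, lam v q (add_unit a j) - lam v q a =
    (v j / (S + v j)) * (q j - N / S).
  move=> j; rewrite /lam.
  have -> : \sum_i v i * add_unit a j i * q i = N + v j * q j.
    rewrite (eq_bigr (fun i => (v i * q i) * add_unit a j i)); last by move=> i _; ring.
    rewrite hsum /N; congr (_ + _); apply: eq_bigr => i _; ring.
  rewrite hsum -/S.
  have hS : S != 0 by rewrite gt_eqF.
  have hSv : S + v j != 0 by rewrite gt_eqF // addr_gt0.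
  rewrite -/N. field; by rewrite hS hSv.
set g := fun j => q j * v j / (S + v j).
set u := fun j : 'I_n.+1 => v j * a j.
have hu : forall i, 0 <= u i by move=> i; apply: mulr_ge0; apply: ltW.
have hg : forall i j : 'I_n.+1, (i <= j)%N -> g j <= g i.
  move=> i j hij; rewrite /g -!mulrA; apply: ler_pM => //.
    by apply: mulr_ge0; [apply: ltW | rewrite invr_ge0 ltW // addr_gt0].
    by apply: hq_mono.
  have h1 := hv_mono i j hij; have h2 := hv_pos i; have h3 := hv_pos j.
  rewrite ler_pdivlMr ?addr_gt0 // mulrAC ler_pdivrMr ?addr_gt0 //.
  nra.
have C := @cheb _ _ u g q hu hg hq_mono; rewrite /u in C.
rewrite -/S in C; rewrite -/N in C.
have key : 0 <= \sum_j (v j * a j * q j / S) * (lam v q (add_unit a j) - lam v q a).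
  have -> : \sum_j (v j * a j * q j / S) * (lam v q (add_unit a j) - lam v q a)
      = S^-1 * (\sum_j u j * g j * q j - N / S * \sum_j u j * g j).
    rewrite mulr_sumr -sumrB mulr_sumr; apply: eq_bigr => j _.
    rewrite hj /u /g; ring.
  apply: mulr_ge0; first by rewrite invr_ge0 ltW.
  rewrite subr_ge0 mulrAC ler_pdivrMr // mulrC [X in _ <= X]mulrC; exact: C.
move: key; rewrite lamE.
under eq_bigr do rewrite mulrBr.
rewrite sumrB -mulr_suml mulrBl mul1r.
set X := \sum_j _. set Y := \sum_j _.
lra.
Qed.
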